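(* Let $k\ge2$ be an integer and $\Gamma_k(t)=\Psi_k(t^3-t^2+7t+1)\in\mathbb{Q}[t]$. Then the map $\alpha\mapsto-\alpha^2-7$ is a $\operatorname{Gal}(\overline{\mathbb{Q}}/\mathbb{Q})$-equivariant bijection from the set of complex roots of $\Gamma_k$ to the set of complex roots of $\widetilde{\Delta}_{3k,3}$. In particular, $\widetilde{\Delta}_{3k,3}$ is irreducible over $\mathbb{Q}$ if and only if $\Gamma_k$ is irreducible over $\mathbb{Q}$.
   Context: $\Psi_k$ denotes the $k$-th cyclotomic polynomial. For the family $f_c(z)=z^2+c$, let $\delta_3(x,c)$ be the third multiplier polynomial (the polynomial monic in $x$ with $\delta_3(x,c)^3=\operatorname{Res}_z(\Phi_3^*(z,c),x-(f_c^{\circ3})'(z))$, where $\Phi_3^*(z,c)=(f_c^{\circ3}(z)-z)/(f_c(z)-z)$); explicitly $\delta_3(x,C/4)=x^2-(2C+16)x+(C^3+8C^2+16C+64)$. Set $\widetilde{\Delta}_{3k,3}(C)=\operatorname{Res}_x(\Psi_k(x),\delta_3(x,C/4))\in\mathbb{Z}[C]$. Roots are taken without multiplicity. *)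

(* Defs.v *)
From mathcomp Require Import all_boot all_order all_algebra all_field.
Set Implicit Arguments. Unset Strict Implicit. Unset Printing Implicit Defensive.
Import GRing.Theory Num.Theory.
Local Open Scope ring_scope.

Definition Gamma_k (k : nat) : {poly int} :=
  'Phi_k \Po ('X^3 - 'X^2 + 7%:R *: 'X + 1).

(* delta_3(x, C/4) = x^2 - (2C+16) x + (C^3 + 8C^2 + 16C + 64),
   as a polynomial in x (outer variable) with coefficients in Z[C]. *)
Definition delta3C : {poly {poly int}} :=
  'X^2 - ((2%:R *: 'X + 16%:R)%:P) * 'X
  + ('X^3 + 8%:R *: 'X^2 + 16%:R *: 'X + 64%:R)%:P.

(* tilde Delta_{3k,3}(C) = Res_x(Psi_k(x), delta_3(x, C/4)) in Z[C] *)
Definition Delta3k3 (k : nat) : {poly int} :=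
  resultant (map_poly polyC 'Phi_k) delta3C.

Definition rootQbar (p : {poly int}) (z : algC) : bool :=
  root (map_poly intr p) z.

Definition ratpoly (p : {poly int}) : {poly rat} := map_poly intr p.

(* Main.v *)
Require Import Defs.
From mathcomp Require Import all_boot all_order all_algebra all_field.
Import GRing.Theory Num.Theory.
Local Open Scope ring_scope.

Set Warnings "-notation-overridden,-ambiguous-paths".
From mathcomp Require Import ring perm zify.
Import Order.TTheory.

Notation pC := (map_poly (intr : int -> algC)).
Notation pQ := (map_poly (ratr : rat -> algC)).

Lemma pQB (p q : {poly rat}) : pQ (p - q) = pQ p - pQ q.
Proof. exact: rmorphB. Qed.
Lemma pQprod (I : Type) (r : seq I) (P : pred I) (F : I -> {poly rat}) :
  pQ (\prod_(i <- r | P i) F i) = \prod_(i <- r | P i) pQ (F i).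
Proof. exact: rmorph_prod. Qed.
Lemma pQn n : pQ n%:R = n%:R.
Proof. exact: rmorph_nat. Qed.

Lemma prod_reindex (k j : nat) (G : nat -> algC) : (0 < k)%N -> coprime j k ->
  (forall i, G (i %% k)%N = G i) ->
  \prod_(m < k | coprime m k) G (j * m)%N = \prod_(m < k | coprime m k) G m.
Proof.
move=> k0 cj per.
pose f e (m : 'I_k) := Ordinal (ltn_pmod (m * e) k0).
have injf : injective (f j).
  apply: can_inj (f (egcdn j k).1) _ => m; apply: val_inj => /=.
  rewrite modnMml -mulnA -modnMmr -{1}(mul1n j).
  by rewrite (chinese_modr cj 0) modnMmr muln1 modn_small.
rewrite [RHS](reindex_inj injf); apply: eq_big => m /=.
  by rewrite coprime_modl coprimeMl cj andbT.
by move=> _; rewrite per mulnC.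
Qed.

Lemma Crat_norm (k e : nat) (z : algC) : (1 < k)%N -> k.-primitive_root z ->
  \prod_(m < k | coprime m k) (2%:R - z ^+ m - z ^+ (e * m)) \in Crat.
Proof.
move=> k1 pz; have k0 : (0 < k)%N := ltnW k1.
set P := \prod_(m < k | _) _.
pose G i := 2%:R - z ^+ i - z ^+ (e * i) : algC.
have per i : G (i %% k)%N = G i.
  rewrite /G prim_expr_mod // !exprM expr_mod //.
  by rewrite -exprM mulnC exprM (prim_expr_order pz) expr1n.
pose Rq : {poly rat} := \prod_(m < k | coprime m k) (2%:R - 'X^m - 'X^(e * m)).
have evR j : coprime j k -> (pQ Rq).[z ^+ j] = P.
  move=> cj; rewrite pQprod horner_prod -[P](@prod_reindex k j G k0 cj per).
  apply: eq_bigr => m _; rewrite !pQB pQn !map_polyXn !hornerE /G.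
  by rewrite -!exprM mulnCA.
pose Phq := map_poly (intr : int -> rat) 'Phi_k.
have mapPhi : pQ Phq = pC 'Phi_k.
  by rewrite -map_poly_comp; apply: eq_map_poly => c /=; rewrite rmorph_int.
pose rq := Rq %% Phq.
have Ec : pQ rq = pQ Rq %% pC 'Phi_k by rewrite map_modp mapPhi.
pose rs := map (fun j : 'I_k => z ^+ j) (filter (fun j : 'I_k => coprime j k) (index_enum 'I_k)).
have Dphi : pC 'Phi_k = \prod_(x <- rs) ('X - x%:P).
  by rewrite (Cintr_Cyclotomic pz) /cyclotomic big_map big_filter.
have nzq : pC 'Phi_k != 0 by rewrite Dphi monic_neq0 // monic_prod_XsubC.
have uniq_rs : uniq rs.
  rewrite map_inj_in_uniq ?filter_uniq ?index_enum_uniq // => i j _ _ /eqP.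
  rewrite (eq_prim_root_expr pz) !modn_small // => /eqP; apply: val_inj.
have zrs : z \in rs.
  have : root (cyclotomic z k) z by rewrite (root_cyclotomic pz).
  by rewrite -(Cintr_Cyclotomic pz) Dphi root_prod_XsubC.
have rootc x : x \in rs -> (pQ rq).[x] = P.
  move=> /mapP[j]; rewrite mem_filter => /andP[cj _] ->.
  rewrite Ec -(evR j cj) {2}(divp_eq (pQ Rq) (pC 'Phi_k)) hornerD hornerM.
  suff -> : (pC 'Phi_k).[z ^+ j] = 0 by rewrite mulr0 add0r.
  apply/eqP; rewrite -/(root _ _) Dphi root_prod_XsubC.
  by apply: map_f; rewrite mem_filter cj mem_index_enum.
have szc : (size (pQ rq) <= size rs)%N.
  have := ltn_modp (pQ Rq) (pC 'Phi_k); rewrite nzq -Ec Dphi size_prod_XsubC.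
  by rewrite ltnS.
have D0 : pQ rq - P%:P = 0.
  apply/eqP; apply: contraT => nzD.
  have allr : all (root (pQ rq - P%:P)) rs.
    by apply/allP => x xr; rewrite /root !hornerE rootc // subrr.
  have := max_poly_roots nzD allr uniq_rs.
  have rs0 : (0 < size rs)%N by case: (rs) zrs.
  have : (size (pQ rq - P%:P)%R <= size rs)%N.
    rewrite (leq_trans (size_polyD _ _)) // geq_max size_polyN szc size_polyC.
    by case: (P != 0).
  by move=> h1 h2; have := leq_trans h2 h1; rewrite ltnn.
have -> : P = (pQ rq)`_0 by move/eqP: D0; rewrite subr_eq0 => /eqP->; rewrite coefC.
by rewrite coef_map Crat_rat.
Qed.
Definition gC (a : algC) : algC := a^+3 - a^+2 + 7%:R * a + 1.

Lemma normU (z : algC) k : (0 < k)%N -> z ^+ k = 1 -> `|z| = 1.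
Proof.
move=> k0 zk; apply: (pexpIrn k0); rewrite ?nnegrE ?normr_ge0 ?ler01 //.
by rewrite -normrX zk normr1 expr1n.
Qed.

Lemma gbound (a : algC) k : (0 < k)%N -> gC a ^+ k = 1 -> gC (- a) ^+ k = 1 ->
  `|2%:R * a ^+ 2| < 1.
Proof.
move=> k0 h1 h2.
have n1 := normU _ _ k0 h1; have n2 := normU _ _ k0 h2.
set z1 := gC a in n1; set z2 := gC (- a) in n2.
have e1 : 2%:R * a ^+ 2 = 2%:R - z1 - z2 by rewrite /z1 /z2 /gC; ring.
have e2 : z1 - z2 = 2%:R * (a * (a ^+ 2 + 7%:R)) by rewrite /z1 /z2 /gC; ring.
set x := `|a|; set y := `|a ^+ 2 + 7%:R|.
have x0 : 0 <= x by apply: normr_ge0.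
have hx2 : x ^+ 2 <= 2%:R.
  have : `|2%:R * a ^+ 2| <= 2%:R * 2%:R.
    rewrite e1 (le_trans (ler_normB _ _)) // n2 (le_trans (lerD (ler_normB _ _) (lexx 1))) //.
    by rewrite n1 normr_nat (_ : 2%:R + 1 + 1 = 2%:R * 2%:R :> algC) //; ring.
  by rewrite normrM normrX normr_nat ler_pM2l ?ltr0n.
have hy : 5%:R <= y.
  have h7 : 7%:R <= y + x ^+ 2.
    have -> : (7%:R : algC) = `|(a ^+ 2 + 7%:R) - a ^+ 2| by rewrite addrAC subrr add0r normr_nat.
    by rewrite (le_trans (ler_normB _ _)) // normrX.
  have : 7%:R <= y + 2%:R := le_trans h7 (lerD (lexx _) hx2).
  by rewrite -lerBlDr -natrB.
have hxy : x * y <= 1.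
  have : `|z1 - z2| <= 2%:R * 1.
    by rewrite (le_trans (ler_normB _ _)) // n1 n2 mulr1.
  by rewrite e2 normrM normr_nat normrM ler_pM2l ?ltr0n.
have h5 : x * 5%:R <= 1 := le_trans (ler_wpM2l x0 hy) hxy.
rewrite normrM normr_nat normrX -/x.
have [x00 | xp] := eqVneq x 0; first by rewrite x00 expr0n mulr0 ltr01.
have xp' : 0 < x by rewrite lt0r xp x0.
have x1 : x <= 1.
  by rewrite (le_trans _ h5) // ler_peMr // ler1n.
have A : 2%:R * x ^+ 2 <= x * 2%:R.
  rewrite (_ : 2%:R * x ^+ 2 = (x * 2%:R) * x); last by ring.
  by rewrite ler_piMr // mulr_ge0 // ler0n.
have B : x * 2%:R < x * 5%:R by rewrite ltr_pM2l // ltr_nat.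
exact: le_lt_trans A (lt_le_trans B h5).
Qed.

Lemma pC_G (a : algC) :
  (pC ('X^3 - 'X^2 + 7%:R *: 'X + 1)).[a] = gC a.
Proof.
rewrite !(rmorphD, rmorphN, rmorphB, rmorph1) /= !map_polyXn map_polyZ map_polyX /=.
by rewrite !hornerE /gC rmorph_nat.
Qed.

Lemma gC_aut (u : {rmorphism algC -> algC}) x : u (gC x) = gC (u x).
Proof.
rewrite -!pC_G -horner_map -map_poly_comp; congr (_.[_]).
by apply: eq_map_poly => c /=; rewrite rmorph_int.
Qed.

Lemma noSym k a : (1 < k)%N -> k.-primitive_root (gC a) ->
  k.-primitive_root (gC (- a)) -> False.
Proof.
move=> k1 pa pb; have k0 := ltnW k1.
set z := gC a in pa.
have a0 : a != 0.
  apply/negP => /eqP a0; move: pa; rewrite /z a0 (_ : gC 0 = 1); last by rewrite /gC; ring.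
  move=> p1; have := eq_prim_root_expr p1 0 1; rewrite !expr1n eqxx.
  by rewrite mod0n modn_small.
have [[e /= _] He] := prim_rootP pa (prim_expr_order pb).
pose H m := 2%:R - z ^+ m - z ^+ (e * m).
have Hm m : coprime m k -> `|H m| < 1 /\ H m != 0.
  move=> cm; have [u Du] := Qn_aut_exists cm.
  have ua : gC (u a) = z ^+ m by rewrite -gC_aut Du // (prim_expr_order pa).
  have ub : gC (- u a) = z ^+ (e * m).
    rewrite -rmorphN -gC_aut He Du ?exprM //.
    by rewrite -exprM mulnC exprM (prim_expr_order pa) expr1n.
  have eH : H m = 2%:R * u a ^+ 2.
    rewrite /H -ua -ub /gC; ring.
  split.
    rewrite eH; apply: (@gbound _ k k0).
      by rewrite ua -exprM mulnC exprM (prim_expr_order pa) expr1n.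
    by rewrite ub -exprM mulnC exprM (prim_expr_order pa) expr1n.
  by rewrite eH mulf_neq0 ?pnatr_eq0 // expf_neq0 // fmorph_eq0.
set P := \prod_(m < k | coprime m k) H m.
have PC : P \in Crat := @Crat_norm k e z k1 pa.
have PA : P \in Aint.
  apply: rpred_prod => m _; rewrite /H !rpredB ?rpred_nat //; apply: rpredX;
  exact: Aint_prim_root pa.
have PZ : P \in Num.int := Cint_rat_Aint PC PA.
have P0 : P != 0 by apply/prodf_neq0 => m cm; case: (Hm m cm).
suff hP : `|P| < 1 by have := lt_le_trans hP (norm_intr_ge1 PZ P0); rewrite ltxx.
have c1 : coprime (Ordinal k1) k by rewrite /coprime gcd1n.
rewrite /P normr_prod (bigD1 (Ordinal k1)) //=.
apply: (le_lt_trans (ler_wpM2l (normr_ge0 _) (prodr_ile1 _ _))).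
  move=> m /andP[cm _]; rewrite normr_ge0 /=; exact: ltW (Hm m cm).1.
by rewrite mulr1; case: (Hm _ c1).
Qed.

Definition dC (z b : algC) : algC :=
  z^+2 - (2%:R*b + 16%:R)*z + (b^+3 + 8%:R*b^+2 + 16%:R*b + 64%:R).

Lemma pCD (p q : {poly int}) : pC (p + q) = pC p + pC q.
Proof. exact: rmorphD. Qed.
Lemma pCn n : pC n%:R = n%:R.
Proof. exact: rmorph_nat. Qed.

Lemma lead_delta3C : lead_coef delta3C = 1.
Proof.
rewrite /delta3C -addrA lead_coefDl ?lead_coefXn //.
rewrite size_polyXn (leq_ltn_trans (size_polyD _ _)) // gtn_max.
rewrite size_polyN (leq_ltn_trans (size_polyMleq _ _)) ?size_polyX ?size_polyC.
  by rewrite (leq_ltn_trans (leq_b1 _)).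
by case: (_ != 0).
Qed.

Lemma rootPhi k z : (0 < k)%N -> root (pC 'Phi_k) z = k.-primitive_root z.
Proof.
move=> k0; have [w pw] := C_prim_root_exists k0.
by rewrite (Cintr_Cyclotomic pw) root_cyclotomic.
Qed.
Lemma rootDelta k b : (0 < k)%N ->
  rootQbar (Delta3k3 k) b <-> exists z, k.-primitive_root z /\ dC z b = 0.
Proof.
move=> k0.
have cfu : commr_rmorph (intr : int -> algC) b by move=> a; apply: mulrC.
pose phi := horner_morph cfu.
have phiE p : phi p = (pC p).[b] by [].
have phiC c : phi c%:P = c%:~R by rewrite phiE map_polyC hornerC.
have mapPhi : map_poly phi (map_poly polyC 'Phi_k) = pC 'Phi_k.
  rewrite -map_poly_comp; apply: eq_map_poly => c /=. exact: phiC.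
have mapD : map_poly phi delta3C =
   'X^2 - (2%:R*b + 16%:R)%:P * 'X + (b^+3 + 8%:R*b^+2 + 16%:R*b + 64%:R)%:P.
  rewrite /delta3C rmorphD rmorphB -![GRing.RMorphism.sort _ _]/(map_poly phi _).
  rewrite map_polyXn rmorphM -![GRing.RMorphism.sort _ _]/(map_poly phi _).
  rewrite map_polyX !map_polyC; congr (_ - _%:P * _ + _%:P).
    transitivity (phi (2%:R *: 'X + 16%:R)); first by [].
    rewrite phiE pCD pCn map_polyZ map_polyX.
    by rewrite !hornerE.
  transitivity (phi ('X^3 + 8%:R *: 'X^2 + 16%:R *: 'X + 64%:R)); first by [].
  rewrite phiE pCD pCD pCD pCn !map_polyZ !map_polyXn map_polyX.
  by rewrite !hornerE.
have HR : phi (resultant (map_poly polyC 'Phi_k) delta3C) =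
   resultant (map_poly phi (map_poly polyC 'Phi_k)) (map_poly phi delta3C).
  apply: (@map_resultant _ _ (horner_morph cfu)).
    have -> : lead_coef (map_poly polyC 'Phi_k) = 1.
      by rewrite lead_coef_map_inj ?(monicP (Cyclotomic_monic k)) //; apply: polyC_inj.
    by rewrite rmorph1 oner_eq0.
  by rewrite lead_delta3C rmorph1 oner_eq0.
rewrite /rootQbar /root -phiE /Delta3k3 HR.
rewrite mapPhi mapD resultant_eq0.
have nzP : pC 'Phi_k != 0.
  by rewrite map_poly_eq0_id0 ?lead_coef_eq0 -?lead_coefE ?(monicP (Cyclotomic_monic k)) ?intr_eq0 ?monic_neq0 ?Cyclotomic_monic.
set Q := (X in gcdp _ X).
have rootQ z : root Q z = (dC z b == 0).
  by rewrite /root /Q /dC !hornerE.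
split.
- move=> H; have /closed_rootP[z]: size (gcdp (pC 'Phi_k) Q) != 1 by rewrite gtn_eqF.
  rewrite root_gcd => /andP[r1 r2]; exists z; split; first by rewrite -rootPhi.
  by apply/eqP; rewrite -rootQ.
- case=> z [pz dz]; apply: (@root_size_gt1 _ z).
    by rewrite gcdp_eq0 negb_and nzP.
  by rewrite root_gcd rootQ dz eqxx andbT rootPhi.
Qed.

Lemma size_c0 : (size ('X^3 + 8%:R *: 'X^2 + 16%:R *: 'X + 64%:R : {poly int})%R <= 4)%N.
Proof.
rewrite (leq_trans (size_polyD _ _)) // geq_max -polyC_natr size_polyC (leq_trans (leq_b1 _)) // andbT.
rewrite (leq_trans (size_polyD _ _)) // geq_max (leq_trans (size_scale_leq _ _)) ?size_polyX //.
by rewrite (leq_trans (size_polyD _ _)) // geq_max (leq_trans (size_scale_leq _ _)) ?size_polyXn.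
Qed.

Lemma size_c1 : (size (2%:R *: 'X + 16%:R : {poly int})%R <= 4)%N.
Proof.
rewrite (leq_trans (size_polyD _ _)) // geq_max -polyC_natr size_polyC (leq_trans (leq_b1 _)) // andbT.
by rewrite (leq_trans (size_scale_leq _ _)) ?size_polyX.
Qed.

Lemma coef_delta3C i : (size (delta3C`_i)%R <= 4)%N.
Proof.
rewrite /delta3C coefD coefB coefXn coefCM coefX !coefC.
case: i => [|[|[|i]]] /=.
- by rewrite mulr0 subr0 add0r size_c0.
- by rewrite mulr1 add0r addr0 size_polyN size_c1.
- by rewrite mulr0 subr0 addr0 size_poly1.
- by rewrite mulr0 subr0 addr0 size_poly0.
Qed.

Lemma size_Delta k : (size (Delta3k3 k) <= (totient k) * 3 + 1)%N.
Proof.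
rewrite /Delta3k3 /resultant /determinant.
apply: (leq_trans (size_sum _ _ _)); apply/bigmax_leqP => s _.
rewrite size_Msign (leq_trans (size_poly_prod_leq _ _)) // card_ord.
have Hdp : (size (map_poly polyC 'Phi_k)).-1 = totient k.
  by rewrite size_map_polyC size_Cyclotomic.
pose w (i : 'I_((size delta3C).-1 + (size (map_poly polyC 'Phi_k)).-1)) :=
  if (i < (size delta3C).-1)%N then 1%N else 4%N.
have Hw i j : (size (Sylvester_mx (map_poly polyC 'Phi_k) delta3C i j) <= w i)%N.
  rewrite Sylvester_mxE /w; case: splitP => l _ /=.
    rewrite coef_map /=; case: (l <= j)%N; rewrite ?mulr0n ?mulr1n ?size_poly0 //.
    by rewrite size_polyC leq_b1.
  case: (l <= j)%N; rewrite ?mulr0n ?mulr1n ?size_poly0 //.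
  exact: coef_delta3C.
have H1 := leq_sum (index_enum _) (fun i (_ : true) => Hw i (s i)).
have H2 : (\sum_i w i = (size delta3C).-1 + 4 * (size (map_poly polyC 'Phi_k)).-1)%N.
  rewrite big_split_ord /= /w; congr (_ + _)%N.
    rewrite (eq_bigr (fun _ => 1%N)) => [|i _]; last by rewrite /= ltn_ord.
    by rewrite sum_nat_const card_ord muln1.
  rewrite (eq_bigr (fun _ => 4%N)) => [|i _]; last first.
    by rewrite /= ltnNge leq_addr.
  by rewrite sum_nat_const card_ord mulnC.
rewrite H2 in H1; move: H1 Hdp; set S := (\sum_i _)%N; set a := (size delta3C).-1; set b := (size _).-1 => H1 Hdp. lia.
Qed.

Lemma rootGamma k a : rootQbar (Gamma_k k) a = root (pC 'Phi_k) (gC a).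
Proof.
by rewrite /rootQbar /Gamma_k map_comp_poly /root horner_comp pC_G.
Qed.

Lemma dC_fact z a : dC z (- a ^+ 2 - 7%:R) = (z - gC a) * (z - gC (- a)).
Proof. rewrite /dC /gC; ring. Qed.

Lemma prim1 k : (1 < k)%N -> ~ k.-primitive_root (1 : algC).
Proof.
move=> k1 p1; have := eq_prim_root_expr p1 0 1; rewrite !expr1n eqxx.
by rewrite mod0n modn_small.
Qed.

Lemma pQ_ratpoly (p : {poly int}) : pQ (ratpoly p) = pC p.
Proof.
by rewrite /ratpoly -map_poly_comp; apply: eq_map_poly => c /=; rewrite rmorph_int.
Qed.

Lemma rootQbarE p a : rootQbar p a = root (pQ (ratpoly p)) a.
Proof. by rewrite pQ_ratpoly. Qed.

Lemma item1 k a : (1 < k)%N -> rootQbar (Gamma_k k) a ->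
  rootQbar (Delta3k3 k) (- a ^+ 2 - 7%:R).
Proof.
move=> k1; have k0 := ltnW k1; rewrite rootGamma rootPhi // => pa.
apply/(@rootDelta k _ k0); exists (gC a); split => //.
by rewrite dC_fact subrr mul0r.
Qed.

Lemma item3 k b : (1 < k)%N -> rootQbar (Delta3k3 k) b ->
  exists2 a, rootQbar (Gamma_k k) a & - a ^+ 2 - 7%:R = b.
Proof.
move=> k1; have k0 := ltnW k1; case/(@rootDelta k b k0) => z [pz dz].
pose al := sqrtC (- b - 7%:R).
have fb : - al ^+ 2 - 7%:R = b by rewrite sqrtCK; ring.
move: dz; rewrite -fb dC_fact => /eqP; rewrite mulf_eq0 !subr_eq0 => /orP[] /eqP ez.
  by exists al; rewrite // rootGamma rootPhi // -ez.
by exists (- al); rewrite ?sqrrN // rootGamma rootPhi // -ez.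
Qed.

Lemma item2 k a b : (1 < k)%N -> rootQbar (Gamma_k k) a -> rootQbar (Gamma_k k) b ->
  - a ^+ 2 - 7%:R = - b ^+ 2 - 7%:R -> a = b.
Proof.
move=> k1 ra rb e.
have : (a - b) * (a + b) = 0.
  have -> : (a - b) * (a + b) = (- b ^+ 2 - 7%:R) - (- a ^+ 2 - 7%:R) by ring.
  by rewrite e subrr.
move/eqP; rewrite mulf_eq0 => /orP[]; first by rewrite subr_eq0 => /eqP.
rewrite addr_eq0 => /eqP eb; exfalso.
move: ra rb; rewrite !rootGamma !rootPhi ?(ltnW k1) // eb => pb pa.
exact: (@noSym k b k1 pa pb).
Qed.

Lemma pQM (p q : {poly rat}) : pQ (p * q) = pQ p * pQ q.
Proof. exact: rmorphM. Qed.
Lemma pQD (p q : {poly rat}) : pQ (p + q) = pQ p + pQ q.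
Proof. exact: rmorphD. Qed.
Lemma pQN (p : {poly rat}) : pQ (- p) = - pQ p.
Proof. exact: rmorphN. Qed.

Lemma gderiv a k : (0 < k)%N -> gC a ^+ k = 1 -> 3%:R * a ^+ 2 - 2%:R * a + 7%:R != 0.
Proof.
move=> k0 h; have n1 := normU _ _ k0 h; set z := gC a in n1 *.
apply/eqP => t0.
have e0 : 27%:R * z ^+ 2 - 176%:R * z + 1472%:R = 0.
  have -> : 27%:R * z ^+ 2 - 176%:R * z + 1472%:R =
    (3%:R * a ^+ 2 - 2%:R * a + 7%:R) *
    (9%:R * a ^+ 4 - 12%:R * a ^+ 3 + 106%:R * a ^+ 2 - 68%:R * a + 189%:R).
    by rewrite /z /gC; ring.
  by rewrite t0 mul0r.
have e : (1472%:R : algC) = 176%:R * z - 27%:R * z ^+ 2.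
  have -> : (1472%:R : algC) = (176%:R * z - 27%:R * z ^+ 2) +
     (27%:R * z ^+ 2 - 176%:R * z + 1472%:R) by ring.
  by rewrite e0 addr0.
have := ler_normB (176%:R * z) (27%:R * z ^+ 2).
by rewrite -e !normrM n1 !normr_nat !mulr1 -natrD ler_nat.
Qed.

Lemma pCG_eq : pC ('X^3 - 'X^2 + 7%:R *: 'X + 1) = 'X^3 - 'X^2 + 7%:R *: 'X + 1.
Proof.
by rewrite !(rmorphD, rmorphN, rmorphB, rmorph1) /= !map_polyXn map_polyZ map_polyX /= rmorph_nat.
Qed.

Definition rsPhi k (z : algC) :=
  map (fun j : 'I_k => z ^+ j) (filter (fun j : 'I_k => coprime j k) (index_enum 'I_k)).

Lemma rsPhiP k z : k.-primitive_root z ->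
  pC 'Phi_k = \prod_(x <- rsPhi k z) ('X - x%:P) /\ uniq (rsPhi k z).
Proof.
move=> pz; split.
  by rewrite (Cintr_Cyclotomic pz) /cyclotomic /rsPhi big_map big_filter.
rewrite map_inj_in_uniq ?filter_uniq ?index_enum_uniq // => i j _ _ /eqP.
rewrite (eq_prim_root_expr pz) !modn_small // => /eqP; apply: val_inj.
Qed.

Lemma Phi_deriv k z : k.-primitive_root z -> (pC 'Phi_k)^`().[z] != 0.
Proof.
move=> pz; have k0 := prim_order_gt0 pz.
have [Dphi u] := @rsPhiP k z pz.
have := separable_prod_XsubC (rsPhi k z); rewrite u -Dphi unlock /separable_poly => cop.
by apply: (coprimep_root cop); rewrite rootPhi.
Qed.

Lemma Gamma_sqfree k (q r : {poly rat}) a : (1 < k)%N ->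
  ratpoly (Gamma_k k) = r * q -> root (pQ q) a -> root (pQ r) a -> False.
Proof.
move=> k1 Hg rq rr; have k0 := ltnW k1.
have rG : rootQbar (Gamma_k k) a by rewrite rootQbarE Hg pQM rootM rq orbT.
move: (rG); rewrite rootGamma rootPhi // => pa.
have d0 : (pQ (ratpoly (Gamma_k k)))^`().[a] = 0.
  rewrite Hg pQM derivM hornerD !hornerM.
  by move/eqP: rq => ->; move/eqP: rr => ->; rewrite !mulr0 mul0r addr0.
move: d0; rewrite pQ_ratpoly /Gamma_k map_comp_poly deriv_comp hornerM horner_comp.
rewrite pC_G => /eqP; rewrite mulf_eq0 => /orP[].
  by apply/negP; apply: Phi_deriv.
have -> : (pC ('X^3 - 'X^2 + 7%:R *: 'X + 1))^`().[a] = 3%:R * a ^+ 2 - 2%:R * a + 7%:R.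
  rewrite pCG_eq !derivD ?derivN !derivXn derivZ derivX -polyC1 derivC.
  rewrite !hornerE /=; ring.
by apply/negP; apply: (@gderiv a k k0 (prim_expr_order pa)).
Qed.

Lemma irr_dvd (p h : {poly rat}) a : irreducible_poly p -> root (pQ p) a ->
  root (pQ h) a -> h != 0 -> p %| h.
Proof.
move=> [_ irr] rp rh nzh.
have nzd : gcdp p h != 0 by rewrite gcdp_eq0 negb_and nzh orbT.
have rd : root (pQ (gcdp p h)) a by rewrite gcdp_map root_gcd rp rh.
have sd : size (gcdp p h) != 1.
  rewrite -(size_map_poly (ratr : {rmorphism rat -> algC})) gtn_eqF //.
  by apply: (root_size_gt1 _ rd); rewrite map_poly_eq0.
have := irr _ sd (dvdp_gcdl p h) => /eqp_dvdl <-.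
exact: dvdp_gcdr.
Qed.

Lemma exists_nonroot (P : {poly algC}) : P != 0 -> exists x, P.[x] != 0.
Proof.
move=> nzP; have [s1 | s1] := eqVneq (size (P - 1)) 1.
  have Dc := size1_polyC (eq_leq s1); set c := (P - 1)`_0 in Dc.
  have eP : P = (c + 1)%:P by rewrite polyCD -Dc subrK.
  exists 0; rewrite eP hornerC; apply: contra nzP => c0.
  by rewrite eP polyC_eq0.
have /closed_rootP [x rx] := s1; exists x.
by move: rx; rewrite /root hornerD hornerN hornerC subr_eq0 => /eqP ->; rewrite oner_eq0.
Qed.

Definition Eq (q : {poly rat}) := even_poly (q * (q \Po - 'X)).
Definition Nq (q : {poly rat}) := Eq q \Po (- 'X - 7%:R).

Lemma hcompN (q : {poly rat}) y : (pQ (q \Po - 'X)).[y] = (pQ q).[- y].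
Proof. by rewrite map_comp_poly horner_comp pQN map_polyX hornerN hornerX. Qed.

Lemma Eval q x : (pQ q).[x] * (pQ q).[- x] = (pQ (Eq q)).[x ^+ 2].
Proof.
set qq := q * (q \Po - 'X).
have hqq y : (pQ qq).[y] = (pQ q).[y] * (pQ q).[- y] by rewrite pQM hornerM hcompN.
have hev y : (pQ qq).[y] = (pQ (even_poly qq)).[y ^+ 2] + (pQ (odd_poly qq)).[y ^+ 2] * y.
  rewrite -{1}(poly_even_odd qq) pQD pQM !map_comp_poly map_polyXn map_polyX.
  by rewrite hornerD hornerM !horner_comp hornerXn hornerX.
have h1 := hev x; have h2 := hev (- x); rewrite sqrrN in h2.
have e : (pQ qq).[x] = (pQ qq).[- x] by rewrite !hqq opprK mulrC.
have o0 : (pQ (odd_poly qq)).[x ^+ 2] * x = 0.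
  move: e; rewrite h1 h2 => /addrI; rewrite mulrN => /eqP; rewrite -subr_eq0 opprK.
  by rewrite -mulr2n mulrn_eq0 /= => /eqP.
by rewrite -hqq h1 o0 addr0.
Qed.

Lemma Nval q x : (pQ (Nq q)).[- x ^+ 2 - 7%:R] = (pQ q).[x] * (pQ q).[- x].
Proof.
rewrite Eval /Nq map_comp_poly horner_comp; congr (_.[_]).
rewrite pQB pQN map_polyX pQn -polyC_natr hornerD !hornerN hornerX hornerC; ring.
Qed.

Lemma Nq_neq0 q : q != 0 -> Nq q != 0.
Proof.
move=> nzq; apply/negP => /eqP N0.
have nzP : pQ (q * (q \Po - 'X)) != 0.
  rewrite map_poly_eq0 mulf_neq0 // comp_poly2_eq0 // size_polyN size_polyX //.
have [x] := exists_nonroot _ nzP.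
by rewrite pQM hornerM hcompN -Nval N0 rmorph0 horner0 eqxx.
Qed.

Lemma size_G : size ('X^3 - 'X^2 + 7%:R *: 'X + 1 : {poly int}) = 4%N.
Proof.
have -> : ('X^3 - 'X^2 + 7%:R *: 'X + 1 : {poly int}) = 'X^3 + (- 'X^2 + 7%:R *: 'X + 1).
  by rewrite !addrA.
rewrite size_polyDl size_polyXn //.
rewrite (leq_ltn_trans (size_polyD _ _)) // gtn_max size_poly1 andbT.
rewrite (leq_ltn_trans (size_polyD _ _)) // gtn_max size_polyN size_polyXn /=.
by rewrite (leq_ltn_trans (size_scale_leq _ _)) // size_polyX.
Qed.

Lemma size_Gq k : size (ratpoly (Gamma_k k)) = (totient k * 3).+1.
Proof.
rewrite /ratpoly size_map_inj_poly ?rmorph0 //; last exact: intr_inj.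
have nz : Gamma_k k != 0.
  by rewrite /Gamma_k comp_poly_eq0 ?size_G // monic_neq0 // Cyclotomic_monic.
rewrite (polySpred nz) /Gamma_k size_comp_poly size_G size_Cyclotomic //.
Qed.

Lemma Gq_root k : (1 < k)%N -> exists a, rootQbar (Gamma_k k) a.
Proof.
move=> k1; have : size (pQ (ratpoly (Gamma_k k))) != 1.
  rewrite size_map_poly size_Gq eqSS muln_eq0 negb_or /= -lt0n totient_gt0.
  by rewrite andbT ltnW.
by case/closed_rootP => a ra; exists a; rewrite rootQbarE.
Qed.

Lemma Delta_nz k : (1 < k)%N -> ratpoly (Delta3k3 k) != 0.
Proof.
move=> k1; apply/negP => /eqP D0.
have : rootQbar (Delta3k3 k) (- 0 ^+ 2 - 7%:R) by rewrite rootQbarE D0 rmorph0 root0.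
case/(@item3 k _ k1) => a ra e.
have h : a ^+ 2 = (- 0 ^+ 2 - 7%:R) - (- a ^+ 2 - 7%:R) by ring.
move: h; rewrite e subrr => /eqP; rewrite expf_eq0 /= => /eqP a0.
move: ra; rewrite rootGamma rootPhi ?(ltnW k1) // a0 (_ : gC 0 = 1); last by rewrite /gC; ring.
exact: prim1.
Qed.

Definition Fq : {poly rat} := (- 7%:R)%:P - 'X^2.

Lemma size_Fq : size Fq = 3%N.
Proof.
have -> : Fq = - ('X^2 - (- 7%:R)%:P) by rewrite /Fq opprB.
by rewrite size_polyN size_XnsubC.
Qed.

Lemma Fq_N : Fq \Po - 'X = Fq.
Proof. by rewrite /Fq comp_polyB comp_polyC comp_Xn_poly sqrrN. Qed.

Lemma evalF (q : {poly rat}) y : (pQ (q \Po Fq)).[y] = (pQ q).[- y ^+ 2 - 7%:R].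
Proof.
rewrite map_comp_poly horner_comp; congr (_.[_]).
rewrite /Fq pQB map_polyC map_polyXn hornerD hornerN hornerC hornerXn.
transitivity ((ratr : rat -> algC) (- 7%:R) - y ^+ 2); first by [].
by rewrite rmorphN rmorph_nat addrC.
Qed.

Lemma irrD k : (1 < k)%N -> irreducible_poly (ratpoly (Gamma_k k)) ->
  irreducible_poly (ratpoly (Delta3k3 k)).
Proof.
move=> k1 irrG; have k0 := ltnW k1.
set D := ratpoly (Delta3k3 k); set G := ratpoly (Gamma_k k).
have nzD : D != 0 := @Delta_nz k k1.
have [a0 ra0] := @Gq_root k k1.
have sD : (size D <= totient k * 3 + 1)%N.
  by rewrite /D /ratpoly size_map_inj_poly ?rmorph0 ?size_Delta //; apply: intr_inj.
have sG : size G = (totient k * 3).+1 := size_Gq k.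
have nzG : G != 0 by rewrite -size_poly_gt0 sG.
have cop : coprimep G (G \Po - 'X).
  rewrite coprimep_def; apply/negPn/negP => sd.
  have e := irrG.2 _ sd (dvdp_gcdl G (G \Po - 'X)).
  have GG : G %| G \Po - 'X by rewrite -(eqp_dvdl _ e) dvdp_gcdr.
  have rG0 : root (pQ G) a0 by rewrite -rootQbarE.
  have : root (pQ (G \Po - 'X)) a0 by apply: (root_dvdp _ rG0); rewrite dvdp_map.
  rewrite /root hcompN -/(root _ _) -rootQbarE => rn.
  move: ra0 rn; rewrite !rootGamma !rootPhi // => pa pb.
  exact: (@noSym k a0 k1 pa pb).
have claim q : q %| D -> size q != 1 -> (totient k * 3 + 1 <= size q)%N.
  move=> qD sq.
  have nzq : q != 0 by apply: contraNneq _ nzD => q0; move: qD; rewrite q0 dvd0p.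
  have [b rb] : exists b, root (pQ q) b.
    by apply/closed_rootP; rewrite size_map_poly.
  have rbD : rootQbar (Delta3k3 k) b.
    by rewrite rootQbarE; apply: (root_dvdp _ rb); rewrite dvdp_map.
  have [a ra fab] := @item3 k _ k1 rbD.
  set qF := q \Po Fq.
  have nzqF : qF != 0 by rewrite comp_poly_eq0 // size_Fq.
  have GqF : G %| qF.
    apply: (@irr_dvd G qF a irrG _ _ nzqF); first by rewrite -rootQbarE.
    by rewrite /root evalF fab.
  have G'qF : (G \Po - 'X) %| qF.
    by rewrite -[qF]/(q \Po Fq) -Fq_N comp_polyA dvdp_comp_poly.
  have := Gauss_dvdp qF cop; rewrite GqF G'qF => /(dvdp_leq nzqF).
  have nzG' : G \Po - 'X != 0 by rewrite comp_poly2_eq0 ?size_polyN ?size_polyX.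
  rewrite size_mul // size_comp_poly2 ?size_polyN ?size_polyX // sG.
  have := size_comp_poly q Fq; rewrite size_Fq -/qF.
  have : (0 < size qF)%N by rewrite size_poly_gt0.
  have : (0 < size q)%N by rewrite size_poly_gt0.
  lia.
split.
  have := @item1 k _ k1 ra0; rewrite rootQbarE => rD.
  by rewrite -(size_map_poly (ratr : {rmorphism rat -> algC})) (root_size_gt1 _ rD) // map_poly_eq0.
move=> q sq qD.
rewrite -dvdp_size_eqp // eqn_leq dvdp_leq //=.
by apply: leq_trans sD (claim q qD sq).
Qed.

Lemma irrG k : (1 < k)%N -> irreducible_poly (ratpoly (Delta3k3 k)) ->
  irreducible_poly (ratpoly (Gamma_k k)).
Proof.
move=> k1 irrD; have k0 := ltnW k1.
set D := ratpoly (Delta3k3 k); set G := ratpoly (Gamma_k k).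
have sG : size G = (totient k * 3).+1 := size_Gq k.
have nzG : G != 0 by rewrite -size_poly_gt0 sG.
split.
  by rewrite sG ltnS muln_gt0 totient_gt0 k0.
move=> q sq qG.
have nzq : q != 0 by apply: contraNneq _ nzG => q0; move: qG; rewrite q0 dvd0p.
set r := G %/ q.
have Hg : G = r * q by rewrite /r divpK.
have nzr : r != 0 by apply: contraNneq _ nzG => r0; rewrite Hg r0 mul0r.
have [sr | sr] := eqVneq (size r) 1%N.
  rewrite -dvdp_size_eqp // Hg size_mul // sr add1n /=.
  by [].
exfalso.
have [a0 ra0] : exists a, root (pQ q) a by apply/closed_rootP; rewrite size_map_poly.
have [a2 ra2] : exists a, root (pQ r) a by apply/closed_rootP; rewrite size_map_poly.
have rG y : root (pQ q) y || root (pQ r) y -> rootQbar (Gamma_k k) y.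
  by rewrite rootQbarE -/G Hg pQM rootM orbC.
have nzN : Nq q != 0 := @Nq_neq0 q nzq.
have DN : D %| Nq q.
  apply: (@irr_dvd D (Nq q) (- a0 ^+ 2 - 7%:R) irrD _ _ nzN).
    by rewrite -rootQbarE; apply: (@item1 k _ k1); apply: rG; rewrite ra0.
  by rewrite /root Nval; move/eqP: ra0 => ->; rewrite mul0r.
have : root (pQ (Nq q)) (- a2 ^+ 2 - 7%:R).
  apply: (root_dvdp _ (_ : root (pQ D) _)); first by rewrite dvdp_map.
  by rewrite -rootQbarE; apply: (@item1 k _ k1); apply: rG; rewrite ra2 orbT.
rewrite /root Nval mulf_eq0 => /orP[] h.
  exact: (@Gamma_sqfree k q r a2 k1 Hg h ra2).
have r1 : rootQbar (Gamma_k k) (- a2) by apply: rG; rewrite /root h.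
have r2 : rootQbar (Gamma_k k) a2 by apply: rG; rewrite ra2 orbT.
move: r1 r2; rewrite !rootGamma !rootPhi // => pa pb.
by apply: (@noSym k (- a2) k1 pa); rewrite opprK.
Qed.


Theorem lemma2p9 (k : nat) (hk : (2 <= k)%N) :
  let f := fun a : algC => - a ^+ 2 - 7%:R in
  [/\ (forall a, rootQbar (Gamma_k k) a -> rootQbar (Delta3k3 k) (f a)),
      (forall a b, rootQbar (Gamma_k k) a -> rootQbar (Gamma_k k) b -> f a = f b -> a = b),
      (forall b, rootQbar (Delta3k3 k) b -> exists2 a, rootQbar (Gamma_k k) a & f a = b),
      (forall (s : {rmorphism algC -> algC}) a,
          rootQbar (Gamma_k k) a -> f (s a) = s (f a))
    & (irreducible_poly (ratpoly (Delta3k3 k)) <-> irreducible_poly (ratpoly (Gamma_k k)))].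
Proof.
move=> f; split.
- by move=> a ra; apply: (@item1 k a hk ra).
- by move=> a b ra rb e; apply: (@item2 k a b hk ra rb e).
- by move=> b rb; apply: (@item3 k b hk rb).
- by move=> s a _; rewrite /f rmorphB rmorphN rmorphXn rmorph_nat.
- by split; [apply: irrG | apply: irrD].
Qed.
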